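(* Let $(\mathbf C,I)$ be a finite-type based chain complex of real inner product spaces, let $M$ be a Morse matching on it, and let $\Phi=\Phi^M:\mathbf C^M\to\mathbf C$, $\Psi=\Psi^M:\mathbf C\to\mathbf C^M$ be the associated Morse retraction. Fix $n$. Then the following two conditions (1) $\mathrm{Proj}_{\operatorname{Ker}\partial_{n+1}^\dagger}(\Phi\Psi s-s)=0$ for all $s\in\mathbf C_n$, and (2) $\mathrm{Proj}_{\operatorname{Ker}\partial_{n-1}}(\Psi^\dagger\Phi^\dagger s-s)=0$ for all $s\in\mathbf C_{n-1}$ hold if and only if $M$ is $(n,n-1)$-free.
   Context: A finite-type based chain complex of real inner product spaces is a chain complex $(\mathbf C,\partial)$ of finite-dimensional real inner product spaces $\mathbf C_n$, $n\ge0$, with pairwise disjoint finite index sets $I=\{I_n\}$ and a direct sum decomposition $\mathbf C_n=\bigoplus_{\alpha\in I_n}C_\alpha$ (summands not necessarily orthogonal); elements of $I_n$ are $n$-cells. $\partial_{\beta,\alpha}=\pi_\beta\circ\partial_n\circ i_\alpha:C_\alpha\to C_\beta$ for $\alpha\in I_n,\beta\in I_{n-1}$ ($i_\alpha$ inclusion, $\pi_\beta$ projection along the other summands). $\dagger$ denotes the adjoint with respect to the inner products (on $\mathbf C^M$ the restricted inner product is used), and $\mathrm{Proj}_W$ is orthogonal projection onto $W$. The graph $\mathcal G(\mathbf C)$ has vertices $\bigcup I_n$ and edges $\alpha\to\beta$ when $\partial_{\beta,\alpha}\neq0$. A Morse matching is a set $M$ of edges with: each vertex on at most one edge of $M$;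 $\partial_{\beta,\alpha}$ an isomorphism for each $\alpha\to\beta\in M$; for each $n$, ''there is a directed path from $\alpha$ to $\beta$ in $\mathcal G(\mathbf C)^M$ (edges of $M$ reversed)'' is a partial order on $I_n$. $M$ is $(n,n-1)$-free if no edge of $M$ joins an $n$-cell to an $(n-1)$-cell. $M^0$ is the set of unmatched cells. For a directed path in $\mathcal G(\mathbf C)^M$ its index is the composite of $\partial_{\sigma_{i+1},\sigma_i}$ for ordinary steps and $-\partial_{\sigma_i,\sigma_{i+1}}^{-1}$ for reversed matched edges (trivial path: identity); $\Gamma_{\beta,\alpha}$ is the sum of indices of all paths from $\alpha$ to $\beta$. Morse complex: $\mathbf C^M_n=\bigoplus_{\alpha\in I_n\cap M^0}C_\alpha$, boundary $x\mapsto\sum_{\beta\in M^0\cap I_{n-1}}\Gamma_{\beta,\alpha}(x)$. Morse retraction: $\Phi^M(x)=\sum_{\beta\in I_n}\Gamma_{\beta,\alpha}(x)$ for $x\in C_\alpha$, $\alpha\in M^0\cap I_n$; $\Psi^M(x)=\sum_{\beta\in M^0\cap I_n}\Gamma_{\beta,\alpha}(x)$ for $x\in C_\alpha$, $\alpha\in I_n$; homotopy $h(x)=\sum_{\beta\in I_{n+1}}\Gamma_{\beta,\alpha}(x)$. *)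

(* Defs.v *)
From HB Require Import structures.
From mathcomp Require Import all_boot all_order all_algebra.
From mathcomp Require Import reals.
Set Implicit Arguments. Unset Strict Implicit. Unset Printing Implicit Defensive.
Import Order.TTheory GRing.Theory Num.Theory.
Local Open Scope ring_scope.

(* C_n is modelled as the row-vector space 'rV[R]_(dim n) with the inner    *)
(* product <x,y>_n = x *m gram n *m y^T (gram n symmetric positive definite,*)
(* so an arbitrary inner product).  The n-cells form the finite type        *)
(* cells n (the I_n; different n give disjoint index sets since a cell is a *)
(* pair (n, alpha)).  The direct sum decomposition C_n = (+)_alpha C_alpha  *)
(* (not necessarily orthogonal) is encoded by its family of projections     *)
(* summ n alpha (= i_alpha o pi_alpha, the projection onto C_alpha along the*)
(* other summands): these are idempotents, pairwise orthogonal, summing to  *)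
(* the identity, and C_alpha is the image of summ n alpha.                  *)
(* bd n : 'M_(dim n.+1, dim n) is the boundary d_{n+1} : C_{n+1} -> C_n     *)
(* acting on row vectors (x |-> x *m bd n); d_0 = 0.                        *)

Record fbcc (R : realType) := FBCC {
  dim : nat -> nat;
  gram : forall n, 'M[R]_(dim n);
  cells : nat -> finType;
  summ : forall n, cells n -> 'M[R]_(dim n);
  bd : forall n, 'M[R]_(dim n.+1, dim n)
}.

Definition is_fbcc (R : realType) (C : fbcc R) : Prop :=
  [/\
      (forall n, (gram C n)^T = gram C n),
      (forall n (v : 'rV[R]_(dim C n)), v != 0 -> 0 < (v *m gram C n *m v^T) 0 0),
      (forall n (a b : cells C n),
          summ a *m summ b = if a == b then summ a else 0),
      (forall n, \sum_(a : cells C n) summ a = 1%:M) &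
      (forall n, bd C n.+1 *m bd C n = 0)].

(* the block  d_{beta,alpha} = pi_beta o d_{n+1} o i_alpha, extended by 0 on
   the other summands of C_{n+1}:  alpha an (n+1)-cell, beta an n-cell *)
Definition blk (R : realType) (C : fbcc R) n (a : cells C n.+1) (b : cells C n)
  : 'M[R]_(dim C n.+1, dim C n) := summ a *m bd C n *m summ b.

Definition edge (R : realType) (C : fbcc R) n (a : cells C n.+1) (b : cells C n)
  : bool := blk a b != 0.

(* d_{beta,alpha} : C_alpha -> C_beta is an isomorphism (it has an inverse:
   a map J : C_beta -> C_alpha, i.e. J = pi_alpha J pi_beta on the nose) *)
Definition blk_iso (R : realType) (C : fbcc R) n (a : cells C n.+1) (b : cells C n)
  : Prop :=
  exists J : 'M[R]_(dim C n, dim C n.+1),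
    [/\ J = summ b *m J *m summ a,
        blk a b *m J = summ a &
        J *m blk a b = summ b].

(* the inverse d_{beta,alpha}^{-1} : C_beta -> C_alpha (extended by 0 on the
   other summands of C_n); it is the inverse whenever blk_iso a b holds *)
Definition blk_inv (R : realType) (C : fbcc R) n (a : cells C n.+1) (b : cells C n)
  : 'M[R]_(dim C n, dim C n.+1) :=
  summ b *m pinvmx (blk a b) *m summ a.

Definition matching (R : realType) (C : fbcc R) :=
  forall n, cells C n.+1 -> cells C n -> bool.

Section Paths.
Variables (R : realType) (C : fbcc R) (M : matching C).

Definition ord_edge n (g : cells C n.+1) (b : cells C n) : bool :=
  edge g b && ~~ M g b.

Definition idcell a (al : cells C a) b : cells C b -> 'M[R]_(dim C a, dim C b) :=
  match a =P b with
  | ReflectT h =>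
      match h in _ = b' return cells C b' -> 'M[R]_(dim C a, dim C b') with
      | erefl => fun be => if al == be then summ al else 0
      end
  | ReflectF _ => fun _ => 0
  end.

Definition is_idcell a (al : cells C a) b : cells C b -> bool :=
  match a =P b with
  | ReflectT h =>
      match h in _ = b' return cells C b' -> bool with
      | erefl => fun be => al == be
      end
  | ReflectF _ => fun _ => false
  end.

(* reach k al b be : there is a directed path with exactly k edges in G(C)^M
   from al (an a-cell) to be (a b-cell).  The last edge gamma -> be is either
   an unmatched edge of G(C) (gamma of degree b+1) or a reversed edge of M
   (be -> gamma in M, gamma of degree b-1). *)
Fixpoint reach a (al : cells C a) (k : nat) : forall b, cells C b -> bool :=
  match k with
  | 0 => fun b be => is_idcell al be
  | k'.+1 => fun b be =>
      [exists g : cells C b.+1, ord_edge g be && reach al k' g]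
      || (match b return cells C b -> bool with
          | 0 => fun _ => false
          | b'.+1 => fun be => [exists g : cells C b', M be g && reach al k' g]
          end be)
  end.

(* pathsum k al b be : the sum of the indices of all directed paths with
   exactly k edges in G(C)^M from al to be, as a map C_al -> C_be (extended
   by 0 on the other summands, i.e. precomposed with pi_al).  Index of an
   ordinary step sigma_i -> sigma_{i+1}: d_{sigma_{i+1},sigma_i}; of a
   reversed matched edge: - d_{sigma_i,sigma_{i+1}}^{-1}. Composition is
   written in diagrammatic (row-vector) order. *)
Fixpoint pathsum a (al : cells C a) (k : nat)
  : forall b, cells C b -> 'M[R]_(dim C a, dim C b) :=
  match k with
  | 0 => fun b be => idcell al be
  | k'.+1 => fun b be =>
      \sum_(g : cells C b.+1 | ord_edge g be) pathsum al k' g *m blk g be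
      + (match b return cells C b -> 'M[R]_(dim C a, dim C b) with
         | 0 => fun _ => 0
         | b'.+1 => fun be =>
             \sum_(g : cells C b' | M be g) pathsum al k' g *m (- blk_inv be g)
         end be)
  end.

(* Under the Morse matching hypotheses every path starting at an a-cell stays
   in degrees <= a+1 and G(C)^M is acyclic, so all paths are simple and have
   fewer than  #(cells of degree <= a+1)  edges. Hence Gamma, the sum over all
   paths, is the following finite sum. *)
Definition pbound a : nat := \sum_(j < a.+2) #|cells C j|.

Definition Gamma a (al : cells C a) b (be : cells C b) : 'M[R]_(dim C a, dim C b) :=
  \sum_(k < pbound a) pathsum al k be.

Definition matched n : cells C n -> bool :=
  match n return cells C n -> bool with
  | 0 => fun al => [exists g : cells C 1, M g al]
  | n'.+1 => fun al => [exists g : cells C n'.+2, M g al]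
                       || [exists b : cells C n', M al b]
  end.

Definition critical n (al : cells C n) : bool := ~~ matched al.

Definition is_morse_matching : Prop :=
  (forall n (a : cells C n.+1) (b : cells C n), M a b -> edge a b) /\
  [/\
      (forall n (a : cells C n.+1) (b b' : cells C n), M a b -> M a b' -> b = b'),
      (forall n (a a' : cells C n.+1) (b : cells C n), M a b -> M a' b -> a = a'),
      (forall n (g : cells C n.+2) (a : cells C n.+1) (b : cells C n),
          M g a -> M a b -> False),
      (forall n (a : cells C n.+1) (b : cells C n), M a b -> blk_iso a b) &
      (* reachability in G(C)^M is a partial order on each I_n (reflexivity and
         transitivity are automatic; antisymmetry is the condition) *)
      (forall n (a b : cells C n),
          (exists k, reach a k b) -> (exists k, reach b k a) -> a = b)].

(* C^M_n as a subspace of C_n: the row space of this matrix is the sum of the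
   C_alpha, alpha critical *)
Definition CM n : 'M[R]_(dim C n) := \sum_(al : cells C n | critical al) summ al.

(* Phi is defined on
   C^M_n (it is extended by 0 on the non-critical summands, which is
   irrelevant as it is only applied to, and adjoined on, C^M_n). *)
Definition Phi n : 'M[R]_(dim C n) :=
  \sum_(al : cells C n | critical al) \sum_(be : cells C n) Gamma al be.

Definition Psi n : 'M[R]_(dim C n) :=
  \sum_(al : cells C n) \sum_(be : cells C n | critical be) Gamma al be.

End Paths.

(* adjoint of A : C_m -> C_n (x |-> x *m A) w.r.t. the inner products with
   Gram matrices Gm, Gn:  <x A, y>_n = <x, y A^dag>_m *)
Definition adj (R : realType) m n (Gm : 'M[R]_m) (Gn : 'M[R]_n) (A : 'M[R]_(m, n))
  : 'M[R]_(n, m) := Gn *m A^T *m invmx Gm.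

(* orthogonal projection (w.r.t. Gram matrix G) onto the row space of W,
   acting on row vectors: v |-> v *m oproj G W *)
Definition oproj (R : realType) k n (G : 'M[R]_n) (W : 'M[R]_(k, n)) : 'M[R]_n :=
  let B := row_base W in G *m B^T *m invmx (B *m G *m B^T) *m B.

Section Conditions.
Variables (R : realType) (C : fbcc R) (M : matching C).

(* Phi^dag : C_n -> C^M_n, adjoint of Phi : C^M_n -> C_n where C^M_n carries
   the restricted inner product: the C_n-adjoint followed by the orthogonal
   projection onto C^M_n. *)
Definition Phi_dag n : 'M[R]_(dim C n) :=
  adj (gram C n) (gram C n) (Phi M n) *m oproj (gram C n) (CM M n).

(* Psi^dag : C^M_n -> C_n, adjoint of Psi : C_n -> C^M_n (C^M_n with the
   restricted inner product): the restriction of the C_n-adjoint to C^M_n. *)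
Definition Psi_dag n : 'M[R]_(dim C n) := adj (gram C n) (gram C n) (Psi M n).

(* Ker d_{n+1}^dag  (a subspace of C_n, as a row space) *)
Definition ker_bd_dag n : 'M[R]_(dim C n) :=
  kermx (adj (gram C n.+1) (gram C n) (bd C n)).

(* Ker d_m  (a subspace of C_m);  d_0 = 0 *)
Definition ker_bd m : 'M[R]_(dim C m) :=
  match m return 'M[R]_(dim C m) with
  | 0 => 1%:M
  | m'.+1 => kermx (bd C m')
  end.

Definition cond1 n : Prop :=
  forall s : 'rV[R]_(dim C n),
    (s *m Psi M n *m Phi M n - s) *m oproj (gram C n) (ker_bd_dag n) = 0.

(* condition (2); for n = 0, C_{-1} = 0 and the condition is vacuous *)
Definition cond2 n : Prop :=
  match n with
  | 0 => True
  | m.+1 => forall s : 'rV[R]_(dim C m),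
      (s *m Phi_dag m *m Psi_dag m - s) *m oproj (gram C m) (ker_bd m) = 0
  end.

Definition nfree n : Prop :=
  match n with
  | 0 => True
  | m.+1 => forall (a : cells C m.+1) (b : cells C m), ~~ M a b
  end.

End Conditions.

(* Main.v *)
Require Import Defs.
From HB Require Import structures.
From mathcomp Require Import all_boot all_order all_algebra.
From mathcomp Require Import reals.
From mathcomp Require Import zify.
Import Defs.
Set Implicit Arguments. Unset Strict Implicit. Unset Printing Implicit Defensive.
Import Order.TTheory GRing.Theory Num.Theory.
Local Open Scope ring_scope.
Section P1.
Variables (R : realType) (C : fbcc R) (M : matching C).
Hypothesis HC : is_fbcc C.

Lemma summ_orth n (a b : cells C n) : summ a *m summ b = if a == b then summ a else 0.
Proof. by case: HC => _ _ H _ _; apply: H. Qed.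

Lemma summ_idem n (a : cells C n) : summ a *m summ a = summ a.
Proof. by rewrite summ_orth eqxx. Qed.

Lemma summ_neq n (a b : cells C n) : a != b -> summ a *m summ b = 0.
Proof. by move=> /negbTE h; rewrite summ_orth h. Qed.

Lemma summ_sum n : \sum_(a : cells C n) summ a = 1%:M.
Proof. by case: HC => _ _ _ H _; apply: H. Qed.

Lemma bd_bd n : bd C n.+1 *m bd C n = 0.
Proof. by case: HC => _ _ _ _ H; apply: H. Qed.

Lemma sum_if_eq (T : finType) (P : pred T) m k (F : T -> 'M[R]_(m, k)) y :
  \sum_(x | P x) (if x == y then F x else 0) = if P y then F y else 0.
Proof.
rewrite big_mkcond (bigD1 y) //= eqxx big1 ?addr0 // => x /negbTE ->.
by case: (P x).
Qed.

Definition Dn b : 'M[R]_(dim C b.+1, dim C b) :=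
  \sum_(g : cells C b.+1) \sum_(be : cells C b | ord_edge M g be) blk g be.
Definition Up b : 'M[R]_(dim C b, dim C b.+1) :=
  \sum_(be : cells C b.+1) \sum_(g : cells C b | M be g) - blk_inv be g.

Definition idm a b : 'M[R]_(dim C a, dim C b) :=
  match a =P b with
  | ReflectT h => match h in _ = b' return 'M[R]_(dim C a, dim C b') with
                  | erefl => 1%:M end
  | ReflectF _ => 0
  end.

Fixpoint Gk a k : forall b, 'M[R]_(dim C a, dim C b) :=
  match k with
  | 0 => fun b => idm a b
  | k'.+1 => fun b => Gk a k' b.+1 *m Dn b +
      match b return 'M[R]_(dim C a, dim C b) with
      | 0 => 0
      | b'.+1 => Gk a k' b' *m Up b'
      end
  end.

Lemma blk_summl n (g : cells C n.+1) (be : cells C n) : summ g *m blk g be = blk g be.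
Proof. by rewrite /blk !mulmxA summ_idem. Qed.

Lemma blk_summr n (g : cells C n.+1) (be : cells C n) (x : cells C n) :
  blk g be *m summ x = if be == x then blk g be else 0.
Proof. by rewrite /blk -mulmxA summ_orth; case: eqP => // _; rewrite mulmx0. Qed.

Lemma blkinv_summl n (g : cells C n.+1) (be : cells C n) : summ be *m blk_inv g be = blk_inv g be.
Proof. by rewrite /blk_inv !mulmxA summ_idem. Qed.

Lemma blkinv_summr n (g : cells C n.+1) (be : cells C n) (x : cells C n.+1) :
  blk_inv g be *m summ x = if g == x then blk_inv g be else 0.
Proof. by rewrite /blk_inv -mulmxA summ_orth; case: eqP => // _; rewrite mulmx0. Qed.

Lemma Dn_summ b (be : cells C b) :
  Dn b *m summ be = \sum_(g | ord_edge M g be) blk g be.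
Proof.
rewrite /Dn mulmx_suml [RHS]big_mkcond; apply: eq_bigr => g _.
rewrite mulmx_suml.
under eq_bigr do rewrite blk_summr.
by rewrite sum_if_eq.
Qed.

Lemma Up_summ b (be : cells C b.+1) :
  Up b *m summ be = \sum_(g | M be g) - blk_inv be g.
Proof.
rewrite /Up mulmx_suml.
have h x : (\sum_(g | M x g) - blk_inv x g) *m summ be =
   if x == be then \sum_(g | M x g) - blk_inv x g else 0.
  rewrite mulmx_suml; case: eqP => [->|/eqP hx].
    by apply: eq_bigr => g _; rewrite mulNmx blkinv_summr eqxx.
  by apply: big1 => g _; rewrite mulNmx blkinv_summr (negbTE hx) oppr0.
under eq_bigr do rewrite h.
by rewrite sum_if_eq.
Qed.

Lemma PS a (al : cells C a) k b (be : cells C b) :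
  pathsum M al k be = summ al *m Gk a k b *m summ be.
Proof.
elim: k b be => [|k IH] b be /=.
  rewrite /idcell /idm; case: (a =P b) => [h|h].
    subst b; by rewrite mulmx1 summ_orth.
  by rewrite mulmx0 mul0mx.
rewrite mulmxDr mulmxDl; congr (_ + _).
  rewrite mulmxA -[_ *m Dn b *m _]mulmxA Dn_summ mulmx_sumr.
  apply: eq_bigr => g _; rewrite IH -!mulmxA blk_summl.
  by rewrite !mulmxA.
case: b be => [|b'] be /=; first by rewrite mulmx0 mul0mx.
rewrite mulmxA -[_ *m Up b' *m _]mulmxA Up_summ mulmx_sumr.
apply: eq_bigr => g _.
by rewrite IH -!mulmxA mulmxN blkinv_summl mulmxN !mulmxA.
Qed.

End P1.
Section P2.
Variables (R : realType) (C : fbcc R) (M : matching C).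
Hypothesis HC : is_fbcc C.
Hypothesis HM : is_morse_matching M.

Lemma Hu1 n (a : cells C n.+1) (b b' : cells C n) : M a b -> M a b' -> b = b'.
Proof. by case: HM => _ [H _ _ _ _]; apply: H. Qed.
Lemma Hu2 n (a a' : cells C n.+1) (b : cells C n) : M a b -> M a' b -> a = a'.
Proof. by case: HM => _ [_ H _ _ _]; apply: H. Qed.
Lemma Hu3 n (g : cells C n.+2) (a : cells C n.+1) (b : cells C n) : M g a -> M a b -> False.
Proof. by case: HM => _ [_ _ H _ _]; apply: H. Qed.
Lemma HMe n (a : cells C n.+1) (b : cells C n) : M a b -> edge a b.
Proof. by case: HM => H _; apply: H. Qed.

Lemma blk_inv_J n (a : cells C n.+1) (b : cells C n) : M a b ->
  blk a b *m blk_inv a b = summ a /\ blk_inv a b *m blk a b = summ b.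
Proof.
move=> hab; case: HM => _ [_ _ _ H _]; case: (H n a b hab) => J [hJ h1 h2].
have e1 : blk_inv a b *m blk a b = summ b.
  have K : blk a b *m pinvmx (blk a b) *m blk a b = blk a b by rewrite mulmxKpV ?submx_refl.
  have K2 : summ a *m blk a b = blk a b by rewrite blk_summl.
  rewrite /blk_inv; move: K K2 h2; set P := pinvmx _; set B := blk a b => K K2 h2'.
  clearbody P B.
  by rewrite -mulmxA K2 -{1}h2' -!mulmxA (mulmxA B) K.
have e2 : blk_inv a b = J.
  have <- : blk_inv a b *m summ a = blk_inv a b by rewrite blkinv_summr // eqxx.
  have hJb : summ b *m J = J by rewrite [RHS]hJ [in LHS]hJ !mulmxA (summ_idem HC).
  by rewrite -h1 mulmxA e1 hJb.
by rewrite e2 h1 -e2 e1.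
Qed.

Lemma UpUp b : Up M b *m Up M b.+1 = 0.
Proof.
rewrite /Up mulmx_suml big1 // => be _; rewrite mulmx_suml big1 // => g hg.
rewrite mulmx_sumr big1 // => be' _; rewrite mulmx_sumr big1 // => g' hg'.
rewrite mulNmx mulmxN -(blkinv_summl HC be' g') mulmxA blkinv_summr //.
case: eqP => [e|]; last by rewrite mul0mx oppr0 oppr0.
by subst g'; case: (Hu3 hg' hg).
Qed.

Lemma idm_neq a b : a != b -> idm C a b = 0.
Proof. by rewrite /idm; case: (a =P b). Qed.
Lemma idm_eq a : idm C a a = 1%:M.
Proof.
rewrite /idm; case: (a =P a) => // h.
by rewrite (eq_irrelevance h erefl).
Qed.

Lemma Gk_high a k : (forall i, Gk M a k (a + i).+2 = 0) /\ Gk M a k a.+1 *m Up M a.+1 = 0.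
Proof.
elim: k => [|k [IH1 IH2]] /=.
  split; first by move=> i; rewrite idm_neq //; apply/eqP; lia.
  by rewrite idm_neq ?mul0mx //; apply/eqP; lia.
split.
  move=> i; have -> : Gk M a k (a + i).+3 = 0 by rewrite -addnS IH1.
  rewrite mul0mx add0r.
  case: i => [|i]; first by rewrite addn0 IH2.
  by rewrite addnS IH1 mul0mx.
have -> : Gk M a k a.+2 = 0 by have := IH1 0; rewrite addn0.
rewrite mulmxDl !mul0mx add0r -mulmxA UpUp.
by rewrite mulmx0.
Qed.

Definition Tz n : 'M[R]_(dim C n) := Up M n *m Dn M n +
  match n return 'M[R]_(dim C n) with 0 => 0 | m.+1 => Dn M m *m Up M m end.

Lemma Gk_rec2 n k : Gk M n k.+2 n = Gk M n k n *m Tz n.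
Proof.
rewrite /Tz [Gk M n k.+2 n]/=.
have -> : Gk M n k n.+2 = 0 by have := proj1 (Gk_high n k) 0; rewrite addn0.
rewrite /= mul0mx add0r.
rewrite mulmxDr !mulmxA; congr (_ + _).
case: n => [|m] /=; first by rewrite mulmx0.
rewrite mulmxDl; case: m => [|m'] /=; first by rewrite mul0mx addr0 mulmxA.
by rewrite -[_ *m Up M m' *m _]mulmxA UpUp mulmx0 addr0 mulmxA.
Qed.

End P2.
Section P3.
Variables (R : realType) (C : fbcc R) (M : matching C).
Hypothesis HC : is_fbcc C.
Hypothesis HM : is_morse_matching M.

Definition Mb b : 'M[R]_(dim C b.+1, dim C b) :=
  \sum_(g : cells C b.+1) \sum_(be : cells C b | M g be) blk g be.
Definition PU n : 'M[R]_(dim C n) :=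
  \sum_(al : cells C n | [exists g : cells C n.+1, M g al]) summ al.
Definition PD n : 'M[R]_(dim C n) :=
  match n return 'M[R]_(dim C n) with
  | 0 => 0
  | m.+1 => \sum_(al : cells C m.+1 | [exists b : cells C m, M al b]) summ al
  end.
Definition DU n : 'M[R]_(dim C n) :=
  match n return 'M[R]_(dim C n) with
  | 0 => 0
  | m.+1 => bd C m *m Up M m
  end.
Definition Tm n : 'M[R]_(dim C n) :=
  DU n + Up M n *m bd C n + (1%:M - CM M n).

Lemma sum_uniq (T : finType) (P : pred T) m k (X : 'M[R]_(m, k)) :
  (forall x y, P x -> P y -> x = y) ->
  \sum_(x | P x) X = if [exists x, P x] then X else 0.
Proof.
move=> hu; case: existsP => [[x0 hx0]|hn].
  rewrite (bigD1 x0) //= big1 ?addr0 // => y /andP [hy hne].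
  by rewrite (hu _ _ hy hx0) eqxx in hne.
by rewrite big1 // => x hx; case: hn; exists x.
Qed.

Lemma bd_blk b : bd C b = \sum_(g : cells C b.+1) \sum_(be : cells C b) blk g be.
Proof.
rewrite -[bd C b]mul1mx -[_ *m bd C b]mulmx1 -{1}(summ_sum HC b.+1) -(summ_sum HC b).
rewrite mulmx_suml mulmx_suml; apply: eq_bigr => g _.
by rewrite mulmx_sumr.
Qed.

Lemma Dn_eq b : Dn M b = bd C b - Mb b.
Proof.
rewrite bd_blk /Dn /Mb -sumrB; apply: eq_bigr => g _.
rewrite [in RHS](bigID (fun be => M g be)) /= [X in X - _]addrC addrK.
rewrite big_mkcond [RHS]big_mkcond; apply: eq_bigr => be _.
rewrite /ord_edge /edge; case: (M g be) => /=; first by rewrite andbF.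
by rewrite andbT; case: eqP.
Qed.

Lemma Mb_Up m : Mb m *m Up M m = - PD m.+1.
Proof.
rewrite /Mb /PD mulmx_suml [in RHS]big_mkcond -sumrN; apply: eq_bigr => g _.
rewrite mulmx_suml.
have -> : \sum_(be | M g be) blk g be *m Up M m = \sum_(be | M g be) - summ g.
  apply: eq_bigr => be hbe.
  rewrite /Up mulmx_sumr (bigD1 g) //= [X in _ + X]big1 ?addr0.
    rewrite mulmx_sumr (bigD1 be) //= [X in _ + X]big1 ?addr0.
      by rewrite mulmxN (proj1 (blk_inv_J HC HM hbe)).
    move=> g' /andP [hg' hne]; rewrite mulmxN -(blkinv_summl HC g g') mulmxA blk_summr //.
    by rewrite eq_sym (negbTE hne) mul0mx oppr0.
  move=> be' hne; rewrite mulmx_sumr big1 // => g' hg'.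
  rewrite mulmxN -(blkinv_summl HC be' g') mulmxA blk_summr //.
  case: eqP => [e|]; last by rewrite mul0mx oppr0.
  by subst g'; rewrite (Hu2 HM hbe hg') eqxx in hne.
rewrite sum_uniq; last by move=> x y hx hy; exact: (Hu1 HM hx hy).
by case: ifP; rewrite ?oppr0.
Qed.

Lemma Up_Mb n : Up M n *m Mb n = - PU n.
Proof.
rewrite /Up /PU mulmx_suml.
have h ga : (\sum_(al | M ga al) - blk_inv ga al) *m Mb n = \sum_(al | M ga al) - summ al.
  rewrite mulmx_suml; apply: eq_bigr => al hal.
  rewrite /Mb mulmx_sumr (bigD1 ga) //= [X in _ + X]big1 ?addr0.
    rewrite mulmx_sumr (bigD1 al) //= [X in _ + X]big1 ?addr0.
      by rewrite mulNmx (proj2 (blk_inv_J HC HM hal)).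
    move=> al' /andP [hal' hne]; rewrite mulNmx -(blk_summl HC ga al') mulmxA.
    by rewrite (Hu1 HM hal hal') eqxx in hne.
  move=> ga' hne; rewrite mulmx_sumr big1 // => al' hal'.
  rewrite mulNmx -(blk_summl HC ga' al') mulmxA blkinv_summr //.
  by rewrite eq_sym (negbTE hne) mul0mx oppr0.
under eq_bigr do rewrite h.
under eq_bigr do rewrite big_mkcond.
rewrite exchange_big /= [in RHS]big_mkcond -sumrN; apply: eq_bigr => al _.
rewrite -big_mkcond sum_uniq; last by move=> x y hx hy; exact: (Hu2 HM hx hy).
by case: ifP; rewrite ?oppr0.
Qed.

Lemma partition n : CM M n + PU n + PD n = 1%:M.
Proof.
rewrite -(summ_sum HC n) /CM /PU /PD.
case: n => [|m].
  by rewrite addr0 /critical /matched [RHS](bigID (fun al => [exists g : cells C 1, M g al])) /= addrC.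
rewrite big_mkcond [X in _ + X + _]big_mkcond [X in _ + X]big_mkcond -!big_split /=.
apply: eq_bigr => al _; rewrite /critical /matched.
case: existsP => [[g hg]|hg]; case: existsP => [[b hb]|hb] /=.
- exfalso; exact: (Hu3 HM hg hb).
- by rewrite add0r addr0.
- by rewrite !add0r.
- by rewrite !addr0.
Qed.

Lemma Tz_eq n : Tz M n = Tm n.
Proof.
have hp : 1%:M - CM M n = PU n + PD n.
  apply/eqP; rewrite subr_eq -(partition n); apply/eqP.
  by rewrite [RHS]addrC addrA.
rewrite /Tz /Tm hp Dn_eq mulmxBr Up_Mb opprK.
case: n hp => [|m] hp /=.
  by rewrite /PD !addr0 add0r.
rewrite Dn_eq mulmxBl Mb_Up opprK.
set a := bd C m *m Up M m; set b := Up M m.+1 *m bd C m.+1.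
set d := PU m.+1; set e := PD m.+1.
by rewrite addrACA [b + a]addrC.
Qed.

End P3.
Section P4.
Variables (R : realType) (C : fbcc R) (M : matching C).
Hypothesis HC : is_fbcc C.
Hypothesis HM : is_morse_matching M.

Lemma Hanti n (a b : cells C n) :
  (exists k, reach M a k b) -> (exists k, reach M b k a) -> a = b.
Proof. by case: HM => _ [_ _ _ _ H]; apply: H. Qed.

Lemma is_idcell_refl d (c : cells C d) : is_idcell c c.
Proof.
rewrite /is_idcell; case: (d =P d) => // h.
by rewrite (eq_irrelevance h erefl) /=.
Qed.

Lemma pathsum_reach a (al : cells C a) k b (be : cells C b) :
  ~~ reach M al k be -> pathsum M al k be = 0.
Proof.
elim: k b be => [|k IH] b be /=.
  rewrite /is_idcell /idcell; case: (a =P b) => // h; subst b => /=.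
  by case: eqP.
rewrite negb_or => /andP [h1 h2].
rewrite big1 ?add0r.
  case: b be h1 h2 => [|b'] be //= _ h2.
  apply: big1 => g hg; rewrite IH ?mul0mx //.
  by apply: contra h2 => hr; apply/existsP; exists g; rewrite hg hr.
move=> g hg; rewrite IH ?mul0mx //.
by apply: contra h1 => hr; apply/existsP; exists g; rewrite hg hr.
Qed.

Lemma reach_trans a (al : cells C a) k b (bb : cells C b) l c (cc : cells C c) :
  reach M al k bb -> reach M bb l cc -> reach M al (k + l) cc.
Proof.
move=> hk; elim: l c cc => [|l IH] c cc /=.
  rewrite /is_idcell; case: (b =P c) => // h; subst c => /= /eqP <-.
  by rewrite addn0.
rewrite addnS /=; case/orP => [/existsP [g /andP [h1 h2]]|h].
  by apply/orP; left; apply/existsP; exists g; rewrite h1 IH.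
apply/orP; right; case: c cc h => [|c'] cc //= /existsP [g /andP [h1 h2]].
by apply/existsP; exists g; rewrite h1 IH.
Qed.

Definition DownStep a (al : cells C a) k c (cc : cells C c) : Prop :=
  match a return cells C a -> Prop with
  | 0 => fun _ => False
  | a'.+1 => fun al => exists g : cells C a', ord_edge M al g /\ reach M g k cc
  end al.

Lemma reach_first a (al : cells C a) k c (cc : cells C c) : reach M al k.+1 cc ->
  (exists g : cells C a.+1, M g al /\ reach M g k cc) \/ DownStep al k cc.
Proof.
elim: k c cc => [|k IH] c cc.
  rewrite /=; case/orP => [/existsP [g /andP [h1 h2]]|h].
    move: h2; rewrite /is_idcell; case: (a =P c.+1) => // h; subst a => /= /eqP ?; subst g.
    by right; exists cc; split => //; apply: is_idcell_refl.
  case: c cc h => [|c'] cc //= /existsP [g /andP [h1 h2]].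
  move: h2; rewrite /is_idcell; case: (a =P c') => // h; subst a => /= /eqP ?; subst g.
  by left; exists cc; split => //; apply: is_idcell_refl.
move=> /=; case/orP => [/existsP [g /andP [h1 h2]]|h].
  case: (IH _ _ h2) => [[f [hf1 hf2]]|].
    by left; exists f; split => //=; apply/orP; left; apply/existsP; exists g; rewrite h1 hf2.
  rewrite /DownStep; case: a al {IH h2} => [|a'] al //= [f [hf1 hf2]].
  by right; exists f; split => //=; apply/orP; left; apply/existsP; exists g; rewrite h1 hf2.
case: c cc h => [|c'] cc //= /existsP [g /andP [h1 h2]].
case: (IH _ _ h2) => [[f [hf1 hf2]]|].
  by left; exists f; split => //=; apply/orP; right; apply/existsP; exists g; rewrite h1 hf2.
rewrite /DownStep; case: a al {IH h2} => [|a'] al //= [f [hf1 hf2]].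
by right; exists f; split => //=; apply/orP; right; apply/existsP; exists g; rewrite h1 hf2.
Qed.

Lemma updown du (u : cells C du) k dw (w : cells C dw) : reach M u k w ->
  du = (dw + k)%N \/ exists d (y : cells C d) (x : cells C d.+1),
    [/\ M x y, (exists k1, reach M u k1 y) & (exists k2, reach M x k2 w)].
Proof.
elim: k dw w => [|k IH] dw w /=.
  by rewrite /is_idcell; case: (du =P dw) => // h _; left; rewrite addn0.
case/orP => [/existsP [g /andP [h1 h2]]|h].
  case: (IH _ _ h2) => [hd|[d [y [x [hxy hk1 [k2 hk2]]]]]]; first by left; lia.
  right; exists d, y, x; split => //; exists k2.+1 => /=.
  by apply/orP; left; apply/existsP; exists g; rewrite h1 hk2.
case: dw w h => [|dw'] w //= /existsP [g /andP [h1 h2]].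
by right; exists dw', g, w; split => //; [exists k | exists 0; apply: is_idcell_refl].
Qed.

Lemma noloop dv (v : cells C dv) k : (0 < k)%N -> reach M v k v -> False.
Proof.
move=> k0 /updown [h|[d [y [x [hxy [k1 hk1] [k2 hk2]]]]]]; first by lia.
have := reach_trans hk2 hk1; case: (k2 + k1)%N => [|m].
  by rewrite /= /is_idcell; case: (d.+1 =P d) => // h; lia.
case/reach_first => [[g [hg _]]|]; first exact: (Hu3 HM hg hxy).
rewrite /DownStep /= => [[z [hz hr]]].
have yz : reach M y 2 z.
  rewrite /=; apply/orP; left; apply/existsP; exists x; rewrite hz /=.
  by apply/orP; right; apply/existsP; exists y; rewrite hxy is_idcell_refl.
have e := Hanti (ex_intro (fun k => reach M z k y) _ hr) (ex_intro (fun k => reach M y k z) _ yz); subst z.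
by move: hz; rewrite /ord_edge hxy andbF.
Qed.

Definition Dm b (be : cells C b) : bool :=
  match b return cells C b -> bool with
  | 0 => fun _ => false
  | b'.+1 => fun be => [exists g : cells C b', M be g]
  end be.

Lemma reach_deg a (al : cells C a) k b (be : cells C b) : reach M al k be ->
  (b <= a)%N || ((b == a.+1) && Dm be).
Proof.
elim: k b be => [|k IH] b be /=.
  by rewrite /is_idcell; case: (a =P b) => // h; subst b; rewrite leqnn.
case/orP => [/existsP [g /andP [h1 h2]]|h].
  by case/orP: (IH _ _ h2) => [h|/andP [/eqP h _]]; apply/orP; left; lia.
case: b be h => [|b'] be //= /existsP [g /andP [h1 h2]].
case/orP: (IH _ _ h2) => [h|/andP [/eqP h hd]].
  case: (ltngtP b' a) => hb; [by apply/orP; left | lia |].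
  by apply/orP; right; apply/andP; split; [apply/eqP; lia | apply/existsP; exists g].
subst b'; move: hd => /= /existsP [g' hg'].
by case: (Hu3 HM h1 hg').
Qed.

Lemma reach_bound a (al : cells C a) k b (be : cells C b) :
  reach M al k be -> (k < pbound C a)%N.
Proof.
pose V := {i : 'I_(a.+2) & cells C i}.
have hV : #|{: V}| = pbound C a by rewrite card_tagged sumnE big_map big_enum.
have degb d (g : cells C d) l : reach M al l g -> (d < a.+2)%N.
  by move=> /reach_deg /orP [h|/andP [/eqP h _]]; lia.
have key : forall l d (g : cells C d) (hr : reach M al l g), exists S : {set V},
    #|S| = l /\ forall v, v \in S -> exists2 k', (0 < k')%N & reach M (tagged v) k' g.
  elim => [|l IH] d g hr.
    by exists set0; split; [rewrite cards0 | move=> v; rewrite in_set0].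
  have hst : exists d' (g' : cells C d'), reach M al l g' /\ reach M g' 1 g.
    move: hr => /=; case/orP => [/existsP [h /andP [h1 h2]]|h].
      exists d.+1, h; split => //=; apply/orP; left; apply/existsP; exists h.
      by rewrite h1 is_idcell_refl.
    case: d g h => [|d'] g //= /existsP [h /andP [h1 h2]].
    exists d', h; split => //=; apply/orP; right; apply/existsP; exists h.
    by rewrite h1 is_idcell_refl.
  case: hst => d' [g' [h1 h2]].
  case: (IH _ _ h1) => S [hS hv].
  pose w : V := existT _ (Ordinal (degb _ _ _ h1)) g'.
  exists (w |: S); split.
    rewrite cardsU1 hS; case: (boolP (w \in S)) => // /hv [k' k'0 hk'].
    by case: (noloop k'0 hk').
  move=> v; rewrite in_setU1 => /orP [/eqP ->|/hv [k' k'0 hk']].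
    by exists 1%N.
  by exists (k' + 1)%N; [lia | apply: reach_trans hk' h2].
move=> hr; case: (key _ _ _ hr) => S [hS hv].
pose w : V := existT _ (Ordinal (degb _ _ _ hr)) be.
have : (#|w |: S| <= #|{: V}|)%N by apply: max_card.
rewrite cardsU1 hS hV; case: (boolP (w \in S)) => [/hv [k' k'0 hk']|_].
  by case: (noloop k'0 hk').
by rewrite add1n.
Qed.

Lemma pathsum_big a (al : cells C a) k b (be : cells C b) :
  (pbound C a <= k)%N -> pathsum M al k be = 0.
Proof.
move=> hk; apply: pathsum_reach; apply/negP => /reach_bound; lia.
Qed.

Lemma Gk_big n k : (pbound C n <= k)%N -> Gk M n k n = 0.
Proof.
move=> hk.
rewrite -[Gk M n k n]mul1mx -[_ *m Gk M n k n]mulmx1 -(summ_sum HC n) !mulmx_suml.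
apply: big1 => al _; rewrite mulmx_sumr; apply: big1 => be _.
by rewrite -(PS M HC) pathsum_big.
Qed.

End P4.
Section P5.
Variables (R : realType) (C : fbcc R) (M : matching C).
Hypothesis HC : is_fbcc C.
Hypothesis HM : is_morse_matching M.

Definition Sm n : 'M[R]_(dim C n) := \sum_(k < pbound C n) Gk M n k n.

Lemma Gk0 n : Gk M n 0 n = 1%:M.
Proof. exact: idm_eq. Qed.

Lemma Gk1 n : Gk M n 1 n = 0.
Proof.
rewrite /= idm_neq ?mul0mx ?add0r; last by apply/eqP; lia.
case: n => [|m] //=; rewrite idm_neq ?mul0mx //; apply/eqP; lia.
Qed.

Lemma Sm_inv n : Sm n *m (1%:M - Tm M n) = 1%:M.
Proof.
set N := pbound C n.
have hT k : Gk M n k n *m Tm M n = Gk M n k.+2 n by rewrite (Gk_rec2 HC HM) (Tz_eq HC HM).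
rewrite mulmxBr mulmx1 /Sm mulmx_suml.
under [X in _ - X]eq_bigr do rewrite hT.
rewrite -!(big_mkord xpredT (fun k => Gk M n k n)) -(big_mkord xpredT (fun k => Gk M n k.+2 n)).
have e1 : \sum_(0 <= k < N.+2) Gk M n k n = 1%:M + \sum_(0 <= k < N) Gk M n k.+2 n.
  by rewrite big_nat_recl // big_nat_recl // Gk0 Gk1 add0r.
have e2 : \sum_(0 <= k < N.+2) Gk M n k n = \sum_(0 <= k < N) Gk M n k n.
  have z1 : Gk M n N n = 0 by apply: (Gk_big HC HM (leqnn _)).
  have z2 : Gk M n N.+1 n = 0 by apply: (Gk_big HC HM (leqnSn _)).
  by rewrite big_nat_recr // big_nat_recr // z1 z2 /= !addr0.
by rewrite -e2 e1 addrK.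
Qed.

Lemma Sm_inv' n : (1%:M - Tm M n) *m Sm n = 1%:M.
Proof. exact: mulmx1C (Sm_inv n). Qed.

Lemma Gamma_eq n (al be : cells C n) : Gamma M al be = summ al *m Sm n *m summ be.
Proof.
rewrite /Gamma /Sm mulmx_sumr mulmx_suml; apply: eq_bigr => k _.
by rewrite (PS M HC).
Qed.

Lemma Phi_eq n : Phi M n = CM M n *m Sm n.
Proof.
rewrite /Phi /CM mulmx_suml; apply: eq_bigr => al _.
under eq_bigr do rewrite Gamma_eq.
by rewrite -mulmx_sumr (summ_sum HC) mulmx1.
Qed.

Lemma Psi_eq n : Psi M n = Sm n *m CM M n.
Proof.
rewrite /Psi /CM -[Sm n]mul1mx -(summ_sum HC n) !mulmx_suml; apply: eq_bigr => al _.
under eq_bigr do rewrite Gamma_eq.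
by rewrite -mulmx_sumr.
Qed.

Lemma crit_up n (g : cells C n) (be : cells C n.+1) : M be g -> ~~ critical M g.
Proof.
move=> h; rewrite /critical negbK; case: n g be h => [|m] g be h /=.
  by apply/existsP; exists be.
by apply/orP; left; apply/existsP; exists be.
Qed.

Lemma crit_down m (al : cells C m.+1) (g : cells C m) : M al g -> ~~ critical M al.
Proof.
by move=> h; rewrite /critical negbK /=; apply/orP; right; apply/existsP; exists g.
Qed.

Lemma CM_idem n : CM M n *m CM M n = CM M n.
Proof.
rewrite /CM mulmx_suml; apply: eq_bigr => a ha; rewrite mulmx_sumr (bigD1 a) //=.
rewrite (summ_idem HC) big1 ?addr0 // => b /andP [_ hb].
by rewrite (summ_neq HC) // eq_sym.
Qed.

Lemma Up_CM m : Up M m *m CM M m.+1 = 0.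
Proof.
rewrite /Up /CM mulmx_suml big1 // => be _; rewrite mulmx_suml big1 // => g hg.
rewrite mulmx_sumr big1 // => al hal; rewrite mulNmx blkinv_summr //.
case: eqP => [e|]; last by rewrite oppr0.
by subst al; rewrite (negbTE (crit_down hg)) in hal.
Qed.

Lemma CM_Up n : CM M n *m Up M n = 0.
Proof.
rewrite /Up /CM mulmx_sumr big1 // => be _; rewrite mulmx_sumr big1 // => g hg.
rewrite mulmx_suml big1 // => al hal; rewrite mulmxN -(blkinv_summl HC be g) mulmxA (summ_orth HC).
case: eqP => [e|]; last by rewrite mul0mx oppr0.
by subst al; rewrite (negbTE (crit_up hg)) in hal.
Qed.

Lemma DU_CM n : DU M n *m CM M n = 0.
Proof. by case: n => [|m] /=; rewrite ?mul0mx // -mulmxA Up_CM mulmx0. Qed.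

Lemma DU_Up n : DU M n *m Up M n = 0.
Proof. by case: n => [|m] /=; rewrite ?mul0mx // -mulmxA (UpUp HC HM) mulmx0. Qed.

Lemma bd_DU n : bd C n *m DU M n = 0.
Proof. by case: n => [|m] /=; rewrite ?mulmx0 // mulmxA (bd_bd HC) mul0mx. Qed.

Lemma PD_CM n : PD M n *m CM M n = 0.
Proof.
case: n => [|m] /=; rewrite ?mul0mx //.
rewrite /CM mulmx_suml big1 // => a ha; rewrite mulmx_sumr big1 // => b hb.
rewrite (summ_neq HC) //; apply/eqP => e; subst b.
by move: ha => /existsP [g hg]; rewrite (negbTE (crit_down hg)) in hb.
Qed.

Lemma PD_Up n : PD M n *m Up M n = 0.
Proof.
case: n => [|m] /=; rewrite ?mul0mx //.
rewrite /Up mulmx_suml big1 // => a ha; rewrite mulmx_sumr big1 // => be _.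
rewrite mulmx_sumr big1 // => g hg.
rewrite mulmxN -(blkinv_summl HC be g) mulmxA (summ_orth HC).
case: eqP => [e|]; last by rewrite mul0mx oppr0.
subst g; move: ha => /existsP [b hb]; case: (Hu3 HM hg hb).
Qed.

Lemma summ_PD m (al : cells C m.+1) (b : cells C m) : M al b -> summ al *m PD M m.+1 = summ al.
Proof.
move=> h; rewrite /= mulmx_sumr (bigD1 al) /=; last by apply/existsP; exists b.
rewrite (summ_idem HC) big1 ?addr0 // => a /andP [_ ha].
by rewrite (summ_neq HC) // eq_sym.
Qed.

Lemma Up_free m : (forall (a : cells C m.+1) (b : cells C m), ~~ M a b) -> Up M m = 0.
Proof.
move=> h; rewrite /Up big1 // => be _; rewrite big1 // => g hg.
by move: (h be g); rewrite hg.
Qed.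

Lemma aux3 (V : zmodType) (o x q : V) : o - (x + (o - q)) = q - x.
Proof. by rewrite opprD opprB addrCA [o + (q - o)]addrCA subrr addr0 addrC. Qed.

Lemma homotopy n :
  Sm n *m CM M n *m (CM M n *m Sm n) =
  1%:M + Sm n *m (Up M n *m bd C n) + DU M n *m Sm n.
Proof.
set S := Sm n; set Q := CM M n; set D := DU M n; set Y := Up M n *m bd C n.
have hA : 1%:M - Tm M n = Q - (D + Y).
  by rewrite /Tm -/Q -/D -/Y aux3.
have E1 : S *m Q = 1%:M + S *m (D + Y).
  by have := Sm_inv n; rewrite hA mulmxBr => <-; rewrite addrNK.
have E2 : Q *m S = 1%:M + (D + Y) *m S.
  by have := Sm_inv' n; rewrite hA mulmxBl => <-; rewrite addrNK.
have QY : Q *m Y = 0 by rewrite /Y mulmxA CM_Up mul0mx.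
have DQ : D *m Q = 0 by apply: DU_CM.
have DY : D *m Y = 0 by rewrite /Y mulmxA DU_Up mul0mx.
have YD : Y *m D = 0 by rewrite /Y -mulmxA bd_DU mulmx0.
have K : Y + S *m (Y *m Y) = 0.
  have : S *m Q *m Y = Y + S *m (Y *m Y).
    by rewrite E1 mulmxDl mul1mx -mulmxA mulmxDl DY add0r.
  by rewrite -mulmxA QY mulmx0 => <-.
have F1 : (D + Y) *m (Q *m S) = Y + Y *m Y *m S.
  rewrite mulmxDl mulmxA DQ mul0mx add0r mulmxA -[Y *m Q *m S]mulmxA E2.
  by rewrite mulmxDr mulmx1 mulmxDl mulmxDr !mulmxA YD mul0mx add0r.
rewrite E1 mulmxDl mul1mx {1}E2 -mulmxA F1 mulmxDl mulmxDr.
set a := D *m S; set b := Y *m S; set c := S *m Y; set e := S *m (Y *m Y *m S).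
have be0 : b + e = 0 by rewrite /b /e mulmxA -mulmxDl K mul0mx.
rewrite -!addrA; congr (_ + _).
by rewrite [b + (c + e)]addrCA be0 addr0 addrC.
Qed.

Lemma PD_eq n : PD M n = - (PD M n *m DU M n *m Sm n).
Proof.
have hA : 1%:M - Tm M n = CM M n - (DU M n + Up M n *m bd C n) by rewrite /Tm aux3.
have E2 := Sm_inv' n; rewrite hA mulmxBl in E2.
have : PD M n *m (CM M n *m Sm n) = 0 by rewrite mulmxA PD_CM mul0mx.
have -> : CM M n *m Sm n = 1%:M + (DU M n + Up M n *m bd C n) *m Sm n by rewrite -E2 addrNK.
rewrite mulmxDr mulmx1 !mulmxDl mulmxDr !mulmxA PD_Up mul0mx mul0mx addr0.
by move/eqP; rewrite addr_eq0 => /eqP.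
Qed.


End P5.
Section P6.
Variables (R : realType) (d : nat) (G : 'M[R]_d).
Hypothesis Gs : G^T = G.
Hypothesis Gp : forall v : 'rV[R]_d, v != 0 -> 0 < (v *m G *m v^T) 0 0.

Lemma BGB_unit k (B : 'M[R]_(k, d)) : row_free B -> B *m G *m B^T \in unitmx.
Proof.
move=> hB; rewrite -row_free_unit -kermx_eq0; apply/negPn/negP => /rowV0Pn [x hx x0].
move/sub_kermxP: hx => hx.
have y0 : x *m B != 0 by rewrite mulmx_free_eq0.
have e : x *m B *m G *m (x *m B)^T = x *m (B *m G *m B^T) *m x^T by rewrite trmx_mul !mulmxA.
by have := Gp y0; rewrite e hx mul0mx mxE ltxx.
Qed.

Lemma G_unit : G \in unitmx.
Proof.
have := @BGB_unit d 1%:M; rewrite trmx1 mulmx1 mul1mx; apply.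
by rewrite row_free_unit unitmx1.
Qed.

Lemma invG_tr : (invmx G)^T = invmx G.
Proof. by rewrite trmx_inv Gs. Qed.

Lemma oproj_fix k (W : 'M[R]_(k, d)) p (x : 'M[R]_(p, d)) : (x <= W)%MS -> x *m oproj G W = x.
Proof.
rewrite /oproj -(eq_row_base W) => hx.
set B := row_base W in hx *.
have hu : B *m G *m B^T \in unitmx by apply: BGB_unit; apply: row_base_free.
clearbody B.
rewrite -(mulmxKpV hx); set y := x *m pinvmx B; clearbody y.
have e : y *m B *m (G *m B^T *m invmx (B *m G *m B^T) *m B) =
  y *m (B *m G *m B^T) *m invmx (B *m G *m B^T) *m B by rewrite !mulmxA.
by rewrite e mulmxK.
Qed.

Lemma oproj_perp k (W : 'M[R]_(k, d)) (v : 'rV[R]_d) : v *m oproj G W = 0 ->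
  forall p (U : 'M[R]_(p, d)), (U <= W)%MS -> v *m G *m U^T = 0.
Proof.
rewrite /oproj; set B := row_base W => h p U.
have hu : B *m G *m B^T \in unitmx by apply: BGB_unit; apply: row_base_free.
have hf : row_free B by apply: row_base_free.
have hU' : (U <= W)%MS -> (U <= B)%MS by rewrite /B eq_row_base.
clearbody B.
have h1 : v *m G *m B^T = 0.
  move: h; rewrite !mulmxA => /eqP; rewrite mulmx_free_eq0 // => /eqP h.
  by rewrite -[v *m G *m B^T]mulmx1 -(mulVmx hu) mulmxA h mul0mx.
move=> /hU' hU.
rewrite -(mulmxKpV hU); set y := U *m pinvmx B; clearbody y.
by rewrite trmx_mul mulmxA h1 mul0mx.
Qed.

Lemma oproj_zero k (W : 'M[R]_(k, d)) (v : 'rV[R]_d) :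
  v *m G *m (row_base W)^T = 0 -> v *m oproj G W = 0.
Proof. by rewrite /oproj !mulmxA => ->; rewrite !mul0mx. Qed.

Lemma oproj_sym k (W : 'M[R]_(k, d)) : oproj G W *m G = G *m (oproj G W)^T.
Proof.
rewrite /oproj; set B := row_base W; clearbody B.
have hK : (invmx (B *m G *m B^T))^T = invmx (B *m G *m B^T).
  by rewrite trmx_inv !trmx_mul trmxK Gs mulmxA.
set K := invmx _ in hK *; clearbody K.
by rewrite !trmx_mul hK trmxK Gs !mulmxA.
Qed.

End P6.

Section P7.
Variables (R : realType) (dn dm : nat) (Gn : 'M[R]_dn) (Gm : 'M[R]_dm) (A : 'M[R]_(dm, dn)).
Hypothesis Gns : Gn^T = Gn.
Hypothesis Gnp : forall v : 'rV[R]_dn, v != 0 -> 0 < (v *m Gn *m v^T) 0 0.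
Hypothesis Gmu : Gm \in unitmx.

Lemma perp_in (v : 'rV[R]_dn) : v *m oproj Gn (kermx (adj Gm Gn A)) = 0 -> (v <= A)%MS.
Proof.
move=> h; set U := (cokermx A)^T *m invmx Gn.
have hU : (U <= kermx (adj Gm Gn A))%MS.
  apply/sub_kermxP; rewrite /U /adj !mulmxA mulmxKV ?(G_unit Gnp) //.
  by rewrite -trmx_mul mulmx_coker trmx0 mul0mx.
have := oproj_perp Gnp h hU.
rewrite /U trmx_mul trmxK (invG_tr Gns) mulmxA mulmxK ?(G_unit Gnp) //.
by rewrite submxE => ->.
Qed.

Lemma in_perp (v : 'rV[R]_dn) : (v <= A)%MS -> v *m oproj Gn (kermx (adj Gm Gn A)) = 0.
Proof.
move=> hv; apply: (oproj_zero); set B := row_base _.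
have hB : B *m Gn *m A^T = 0.
  have : (B <= kermx (adj Gm Gn A))%MS by rewrite eq_row_base.
  move/sub_kermxP; rewrite /adj !mulmxA => h.
  by rewrite -[B *m Gn *m A^T](mulmxKV Gmu) h mul0mx.
rewrite -(mulmxKpV hv); set y := v *m pinvmx A; clearbody y.
have -> : y *m A *m Gn *m B^T = y *m (A *m Gn *m B^T) by rewrite !mulmxA.
have -> : A *m Gn *m B^T = (B *m Gn *m A^T)^T by rewrite !trmx_mul trmxK Gns mulmxA.
by rewrite hB trmx0 mulmx0.
Qed.

End P7.
Lemma rows0 (R : realType) p q (X : 'M[R]_(p, q)) : (forall s : 'rV[R]_p, s *m X = 0) -> X = 0.
Proof. by move=> h; apply/row_matrixP => i; rewrite rowE h row0. Qed.

Lemma DU_free (R : realType) (C : fbcc R) (M : matching C) n : nfree M n -> DU M n = 0.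
Proof. by case: n => [|m] //= h; rewrite Up_free ?mulmx0. Qed.

Lemma homotopy_s (R : realType) (C : fbcc R) (M : matching C) (HC : is_fbcc C)
  (HM : is_morse_matching M) k (s : 'rV[R]_(dim C k)) :
  s *m Psi M k *m Phi M k - s = s *m Sm M k *m (Up M k *m bd C k) + s *m DU M k *m Sm M k.
Proof.
rewrite (Psi_eq M HC) (Phi_eq M HC) -mulmxA (homotopy HC HM) !mulmxDr mulmx1 !mulmxA.
by apply/eqP; rewrite subr_eq -addrA addrC.
Qed.

Lemma ker_DU (R : realType) (C : fbcc R) (M : matching C) m p (U : 'M[R]_(p, dim C m)) :
  (U <= ker_bd C m)%MS -> U *m DU M m = 0.
Proof.
case: m U => [|m'] U /= hU; first by rewrite mulmx0.
by move/sub_kermxP: hU => hU; rewrite mulmxA hU mul0mx.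
Qed.

Theorem mainTheorem2 (R : realType) (C : fbcc R) (M : matching C) (n : nat) :
  is_fbcc C -> is_morse_matching M ->
  (cond1 M n /\ cond2 M n) <-> nfree M n.
Proof.
move=> HC HM.
have Gs k : (gram C k)^T = gram C k by case: HC => H _ _ _ _; apply: H.
have Gp k : forall v : 'rV[R]_(dim C k), v != 0 -> 0 < (v *m gram C k *m v^T) 0 0 by case: HC => _ H _ _ _; apply: H.
have Gu k : gram C k \in unitmx := G_unit (Gp k).
split.
  case=> [h1 _]; case: n h1 => [|m] h1 //=.
  move=> a b; apply/negP => hab.
  have hv (s : 'rV[R]_(dim C m.+1)) : (s *m Psi M m.+1 *m Phi M m.+1 - s) *m bd C m = 0.
    have hin := perp_in (Gs m.+1) (Gp m.+1) (h1 s).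
    move: hin; move: (s *m Psi M m.+1 *m Phi M m.+1 - s) => v hin.
    rewrite -(mulmxKpV hin); move: (v *m pinvmx _) => y.
    by rewrite -mulmxA (bd_bd HC) mulmx0.
  have hX : DU M m.+1 *m Sm M m.+1 *m bd C m = 0.
    apply: rows0 => s; have := hv s; rewrite homotopy_s // mulmxDl.
    rewrite -!mulmxA (bd_bd HC) !mulmx0 add0r !mulmxA => ->.
    done.
  have hPD : PD M m.+1 *m bd C m = 0.
    rewrite {1}(PD_eq HC HM) mulNmx -(mulmxA (PD M m.+1 *m DU M m.+1)) -(mulmxA (PD M m.+1)).
    by rewrite (mulmxA (DU M m.+1)) hX mulmx0 oppr0.
  have : blk a b = 0.
    by rewrite /blk -(summ_PD HC hab) -[summ a *m _ *m bd C m]mulmxA hPD mulmx0 mul0mx.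
  by move/eqP; move: (HMe HM hab); rewrite /edge => /negbTE ->.
move=> hf; split.
  move=> s; apply: (in_perp (Gs n) (Gu n.+1)).
  rewrite homotopy_s // (DU_free hf) mulmx0 mul0mx addr0 mulmxA.
  exact: submxMl.
case: n hf => [|m] hf //= s.
have hUp : Up M m = 0 by apply: Up_free.
set W := ker_bd C m.
set G := gram C m.
have hfix : forall p (U : 'M[R]_(p, dim C m)), (U <= W)%MS ->
    U *m Psi M m *m Phi M m = U.
  move=> p U hU.
  have hUD : U *m DU M m = 0 by apply: ker_DU.
  rewrite (Psi_eq M HC) (Phi_eq M HC) -mulmxA (homotopy HC HM) hUp mul0mx mulmx0 addr0.
  by rewrite mulmxDr mulmx1 mulmxA hUD mul0mx addr0.
apply: oproj_zero.
have hW : (row_base W <= W)%MS by rewrite eq_row_base.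
move: (row_base W) hW => U hU.
rewrite /Phi_dag /Psi_dag /adj -/G.
set P := oproj G (CM M m).
have hPG : P *m G = G *m P^T by apply: oproj_sym; apply: Gs.
have hUP : U *m Psi M m *m P = U *m Psi M m.
  apply: (oproj_fix (Gp m)); rewrite (Psi_eq M HC) mulmxA; exact: submxMl.
clearbody P.
have e : (s *m (G *m (Phi M m)^T *m invmx G *m P) *m (G *m (Psi M m)^T *m invmx G) - s) *m G *m U^T
   = s *m G *m (U *m Psi M m *m P *m Phi M m)^T - s *m G *m U^T.
  rewrite mulmxBl mulmxBl; congr (_ - _).
  rewrite !trmx_mul !mulmxA mulmxKV ?Gu //.
  by rewrite -[s *m G *m (Phi M m)^T *m invmx G *m P *m G]mulmxA hPG mulmxA mulmxKV ?Gu.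
by rewrite e hUP hfix // subrr.
Qed.
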